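(* Let $m$ be a positive integer, $K\subseteq\mathbb{R}$, $\gamma:K\to\mathbb{H}$, $X\subseteq K$ with $\#X=m+1$, $a,b\in X$, and $p\in\mathbb{H}$. Then $$A[X,p*\gamma;a,b]=A[X,\gamma;a,b]\quad\text{and}\quad V[X,p*\gamma;a,b]=V[X,\gamma;a,b],$$ where $p*\gamma$ is the map $t\mapsto p*\gamma(t)$.
   Context: $\mathbb{H}$ is $\mathbb{R}^3$ with group law $(x,y,z)*(x',y',z')=(x+x',\,y+y',\,z+z'+2(yx'-xy'))$. For a set $X$ of $m+1$ distinct points and $\phi:X\to\mathbb{R}$, $P(X;\phi)$ denotes the unique polynomial of degree $\le m$ agreeing with $\phi$ on $X$ (Newton interpolation polynomial). For $\gamma=(f,g,h)$, $P_f=P(X;f)$, $P_g=P(X;g)$, and $a,b\in X$: $A[X,\gamma;a,b]=h(b)-h(a)-2\int_a^b(P_f'P_g-P_g'P_f)$, $V[X,\gamma;a,b]=\operatorname{diam}(X)^{2m}+\operatorname{diam}(X)^m\int_a^b(|P_f'|+|P_g'|)$. *)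

(* Defs.v *)
From Stdlib Require Import Reals Lra List.
From Coquelicot Require Import Coquelicot.
Open Scope R_scope.

Definition Heis : Type := (R * R * R)%type.
Definition hx (p : Heis) : R := fst (fst p).
Definition hy (p : Heis) : R := snd (fst p).
Definition hz (p : Heis) : R := snd p.
Definition hmul (p q : Heis) : Heis :=
  (hx p + hx q, hy p + hy q, hz p + hz q + 2 * (hy p * hx q - hx p * hy q)).

Definition hleft (p : Heis) (gam : R -> Heis) : R -> Heis :=
  fun t => hmul p (gam t).

(** Newton divided differences of phi on the nodes xs = [x_0; ...; x_m]:
    dd xs phi n i = phi[x_i, ..., x_{i+n}]. *)
Fixpoint dd (xs : list R) (phi : R -> R) (n i : nat) : R :=
  match n with
  | O => phi (nth i xs 0)
  | S n' => (dd xs phi n' (S i) - dd xs phi n' i)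
            / (nth (i + S n') xs 0 - nth i xs 0)
  end.

Fixpoint nprod (xs : list R) (t : R) (k : nat) : R :=
  match k with
  | O => 1
  | S k' => nprod xs t k' * (t - nth k' xs 0)
  end.

Definition newton (xs : list R) (phi : R -> R) (t : R) : R :=
  sum_f_R0 (fun k => dd xs phi k 0 * nprod xs t k) (pred (length xs)).

Definition diam (xs : list R) : R :=
  fold_right (fun x acc =>
    fold_right (fun y acc' => Rmax (Rabs (x - y)) acc') acc xs) 0 xs.

Definition Aq (xs : list R) (gam : R -> Heis) (a b : R) : R :=
  let Pf := newton xs (fun t => hx (gam t)) in
  let Pg := newton xs (fun t => hy (gam t)) in
  hz (gam b) - hz (gam a)
  - 2 * RInt (fun t => Derive Pf t * Pg t - Derive Pg t * Pf t) a b.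

Definition Vq (xs : list R) (gam : R -> Heis) (a b : R) : R :=
  let m := pred (length xs) in
  let Pf := newton xs (fun t => hx (gam t)) in
  let Pg := newton xs (fun t => hy (gam t)) in
  diam xs ^ (2 * m)
  + diam xs ^ m * RInt (fun t => Rabs (Derive Pf t) + Rabs (Derive Pg t)) a b.

(* Main.v *)
Require Import Defs.
From Stdlib Require Import Reals List Lra Lia FunctionalExtensionality.
From Coquelicot Require Import Coquelicot.
Open Scope R_scope.

Lemma is_derive_eq (f : R -> R) x l l' : is_derive f x l -> l = l' -> is_derive f x l'.
Proof. intros H E; subst; auto. Qed.

Lemma cont_plusR (f g : R -> R) t : continuous f t -> continuous g t -> continuous (fun u => f u + g u) t.
Proof. intros. exact (continuous_plus f g t H H0). Qed.
Lemma cont_minusR (f g : R -> R) t : continuous f t -> continuous g t -> continuous (fun u => f u - g u) t.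
Proof. intros. exact (continuous_minus f g t H H0). Qed.
Lemma cont_multR (f g : R -> R) t : continuous f t -> continuous g t -> continuous (fun u => f u * g u) t.
Proof. intros. exact (continuous_mult f g t H H0). Qed.
Lemma cont_absR (f : R -> R) t : continuous f t -> continuous (fun u => Rabs (f u)) t.
Proof. intros. apply continuous_comp; auto. apply continuous_Rabs. Qed.

Lemma der_multR (f g : R -> R) t df dg : is_derive f t df -> is_derive g t dg ->
  is_derive (fun u => f u * g u) t (df * g t + f t * dg).
Proof. intros. exact (is_derive_mult f g t df dg H H0 Rmult_comm). Qed.
Lemma der_plusR (f g : R -> R) t df dg : is_derive f t df -> is_derive g t dg ->
  is_derive (fun u => f u + g u) t (df + dg).
Proof. intros. exact (is_derive_plus f g t df dg H H0). Qed.

Lemma cont_sum (F : nat -> R -> R) n t : (forall k, continuous (F k) t) ->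
  continuous (fun u => sum_f_R0 (fun k => F k u) n) t.
Proof.
  intro H. induction n; simpl. apply H. apply cont_plusR; auto.
Qed.

Lemma der_sum (F dF : nat -> R -> R) n t : (forall k, is_derive (F k) t (dF k t)) ->
  is_derive (fun u => sum_f_R0 (fun k => F k u) n) t (sum_f_R0 (fun k => dF k t) n).
Proof.
  intro H. induction n; simpl. apply H. apply der_plusR; auto.
Qed.


Lemma isR_plus (f g : R -> R) a b If Ig : is_RInt f a b If -> is_RInt g a b Ig ->
  is_RInt (fun y => f y + g y) a b (If + Ig).
Proof. intros. exact (is_RInt_plus f g a b If Ig H H0). Qed.
Lemma isR_minus (f g : R -> R) a b If Ig : is_RInt f a b If -> is_RInt g a b Ig ->
  is_RInt (fun y => f y - g y) a b (If - Ig).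
Proof. intros. exact (is_RInt_minus f g a b If Ig H H0). Qed.
Lemma isR_scal (f : R -> R) a b k If : is_RInt f a b If ->
  is_RInt (fun y => k * f y) a b (k * If).
Proof. intros. exact (is_RInt_scal f a b k If H). Qed.
Lemma isR_eq (f : R -> R) a b l l' : is_RInt f a b l -> l = l' -> is_RInt f a b l'.
Proof. intros H E; subst; auto. Qed.
Section Alg.
Variable xs : list R.
Variable phi : R -> R.
Notation x j := (nth j xs 0).

Fixpoint om (i k : nat) (t : R) : R :=
  match k with O => 1 | S k' => om i k' t * (t - x (i + k')) end.

Lemma nprod_om t k : nprod xs t k = om 0 k t.
Proof. induction k; simpl; auto. rewrite IHk; auto. Qed.

Lemma om_front i k t : om i (S k) t = (t - x i) * om (S i) k t.
Proof.
  induction k; simpl. rewrite Nat.add_0_r; ring.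
  simpl in IHk. rewrite IHk. rewrite Nat.add_succ_r. simpl. ring.
Qed.

Lemma om_node i k j t : (j < k)%nat -> t = x (i + j) -> om i k t = 0.
Proof.
  induction k; intros Hj Ht. lia. simpl.
  destruct (Nat.eq_dec j k). subst. ring. rewrite IHk; [ring|lia|auto].
Qed.

Definition NN (i n : nat) (t : R) : R :=
  sum_f_R0 (fun k => dd xs phi k i * om i k t) n.

Hypothesis Hdist : forall i j, (i < length xs)%nat -> (j < length xs)%nat -> x i = x j -> i = j.

Lemma dd_step n i : (i + S n < length xs)%nat ->
  dd xs phi n (S i) - dd xs phi n i = dd xs phi (S n) i * (x (i + S n) - x i).
Proof.
  intro H. simpl. field. intro E. apply Rminus_diag_uniq in E.
  apply Hdist in E; lia.
Qed.

Lemma NN_diff n i t : (i + S n < length xs)%nat ->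
  NN (S i) n t - NN i n t = (dd xs phi n (S i) - dd xs phi n i) * om (S i) n t.
Proof.
  revert i. induction n; intros i H.
  - unfold NN; simpl. ring.
  - unfold NN in *. rewrite !tech5. cbv beta.
    assert (A : sum_f_R0 (fun k : nat => dd xs phi k (S i) * om (S i) k t) n =
      sum_f_R0 (fun k : nat => dd xs phi k i * om i k t) n +
      (dd xs phi n (S i) - dd xs phi n i) * om (S i) n t)
      by (rewrite <- (IHn i) by lia; ring).
    rewrite A. rewrite (dd_step n i) by lia.
    rewrite (om_front i n t).
    change (om (S i) (S n) t) with (om (S i) n t * (t - x (S i + n))).
    replace (S i + n)%nat with (i + S n)%nat by lia. ring.
Qed.

Lemma NN_interp n i j : (i + n < length xs)%nat -> (j <= n)%nat -> NN i n (x (i + j)) = phi (x (i + j)).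
Proof.
  revert i j. induction n; intros i j H Hj.
  - unfold NN; simpl. replace j with 0%nat by lia. rewrite Nat.add_0_r. ring.
  - destruct (Nat.eq_dec j (S n)).
    + subst j.
      assert (E : NN i (S n) (x (i + S n)) = NN (S i) n (x (i + S n))
        - om (S i) n (x (i + S n)) * dd xs phi (S n) i * (x (i + S n) - x (i + S n))).
      { pose proof (NN_diff n i (x (i + S n)) ltac:(lia)) as D.
        rewrite dd_step in D by lia.
        unfold NN in *. rewrite tech5. cbv beta. rewrite om_front.
        set (T := x (i + S n)) in *.
        set (S1 := sum_f_R0 (fun k : nat => dd xs phi k (S i) * om (S i) k T) n) in *.
        set (S0 := sum_f_R0 (fun k : nat => dd xs phi k i * om i k T) n) in *.
        assert (S0 = S1 - dd xs phi (S n) i * (T - x i) * om (S i) n T) by (rewrite <- D; ring).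
        rewrite H0. ring. }
      rewrite E. replace (i + S n)%nat with (S i + n)%nat by lia.
      rewrite IHn by lia. ring.
    + unfold NN; rewrite tech5. fold (NN i n (x (i + j))).
      rewrite IHn by lia. rewrite (om_node i (S n) j) by (auto; lia). ring.
Qed.

Lemma newton_NN t : newton xs phi t = NN 0 (pred (length xs)) t.
Proof. unfold newton, NN. apply sum_eq. intros. rewrite nprod_om. auto. Qed.

Fixpoint dom (i k : nat) (t : R) : R :=
  match k with O => 0 | S k' => dom i k' t * (t - x (i + k')) + om i k' t end.

Lemma lin_der c t : is_derive (fun u => u - c) t 1.
Proof. auto_derive; auto. Qed.
Lemma lin_cont c t : continuous (fun u => u - c) t.
Proof. apply cont_minusR. apply continuous_id. apply continuous_const. Qed.

Lemma om_der i k t : is_derive (om i k) t (dom i k t).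
Proof.
  induction k.
  - simpl. change (is_derive (fun _ : R => 1) t 0). auto_derive; auto.
  - change (is_derive (fun u => om i k u * (u - x (i + k))) t (dom i k t * (t - x (i + k)) + om i k t)).
    eapply is_derive_eq. apply (der_multR (om i k) (fun u => u - x (i + k)) t _ 1 IHk (lin_der _ t)).
    now rewrite Rmult_1_r.
Qed.

Lemma om_cont i k t : continuous (om i k) t.
Proof. induction k; simpl. apply continuous_const. apply (cont_multR (om i k) (fun u => u - _)); auto. apply lin_cont. Qed.
Lemma dom_cont i k t : continuous (dom i k) t.
Proof. induction k; simpl. apply continuous_const.
  apply (cont_plusR (fun u => dom i k u * (u - _)) (om i k)). apply (cont_multR (dom i k) (fun u => u - _)); auto. apply lin_cont. apply om_cont. Qed.
End Alg.

Definition nd (xs : list R) (f : R -> R) (t : R) : R :=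
  sum_f_R0 (fun k => dd xs f k 0 * dom xs 0 k t) (pred (length xs)).

Lemma newton_der xs f t : is_derive (newton xs f) t (nd xs f t).
Proof.
  unfold newton, nd.
  apply (der_sum (fun k u => dd xs f k 0 * nprod xs u k) (fun k u => dd xs f k 0 * dom xs 0 k u)).
  intro k. apply (is_derive_ext (fun u => dd xs f k 0 * om xs 0 k u)).
  intro u. rewrite nprod_om. reflexivity.
  apply is_derive_scal. apply om_der.
Qed.

Lemma nd_cont xs f t : continuous (nd xs f) t.
Proof.
  unfold nd. apply (cont_sum (fun k u => dd xs f k 0 * dom xs 0 k u)).
  intro k. apply (cont_multR (fun _ => dd xs f k 0) (dom xs 0 k)).
  apply continuous_const. apply dom_cont.
Qed.

Lemma newton_cont xs f t : continuous (newton xs f) t.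
Proof. apply (ex_derive_continuous (K:=R_AbsRing) (V:=R_NormedModule)). eexists. apply newton_der. Qed.

Lemma Derive_newton xs f : Derive (newton xs f) = nd xs f.
Proof. apply functional_extensionality. intro t. apply is_derive_unique. apply newton_der. Qed.

Lemma dd_S xs f n i : dd xs f (S n) i =
  (dd xs f n (S i) - dd xs f n i) / (nth (i + S n) xs 0 - nth i xs 0).
Proof. reflexivity. Qed.

Lemma dd_shift xs f c n i : dd xs (fun t => c + f t) n i =
  match n with O => c + dd xs f 0 i | S _ => dd xs f n i end.
Proof.
  revert i. induction n; intro i. reflexivity.
  rewrite (dd_S xs (fun t => c + f t)). rewrite !IHn. destruct n.
  - simpl. f_equal. ring.
  - reflexivity.
Qed.

Lemma newton_shift xs f c : newton xs (fun t => c + f t) = fun t => c + newton xs f t.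
Proof.
  apply functional_extensionality. intro t. unfold newton.
  induction (pred (length xs)).
  - simpl. ring.
  - rewrite !tech5, IHn. rewrite dd_shift. ring.
Qed.

Lemma Derive_newton_shift xs f c : Derive (newton xs (fun t => c + f t)) = nd xs f.
Proof.
  apply functional_extensionality. intro t. apply is_derive_unique.
  rewrite newton_shift. eapply is_derive_eq.
  apply (der_plusR (fun _ => c) (newton xs f) t 0). auto_derive; auto.
  apply newton_der. simpl. apply Rplus_0_l.
Qed.

Lemma newton_interp xs f j : NoDup xs -> (j < length xs)%nat ->
  newton xs f (nth j xs 0) = f (nth j xs 0).
Proof.
  intros Hn Hj. rewrite newton_NN.
  apply (NN_interp xs f) with (i := 0%nat) (j := j); try lia.
  intros i k Hi Hk E. apply (proj1 (NoDup_nth xs 0)) in E; auto.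
Qed.

Theorem lemma4p3 (m : nat) (K : R -> Prop) (gam : R -> Heis)
  (xs : list R) (a b : R) (p : Heis) :
  (0 < m)%nat ->
  NoDup xs -> length xs = S m -> (forall x, In x xs -> K x) ->
  In a xs -> In b xs ->
  Aq xs (hleft p gam) a b = Aq xs gam a b /\
  Vq xs (hleft p gam) a b = Vq xs gam a b.
Proof.
  intros Hm Hnd Hlen HK Ha Hb.
  set (f := fun t => hx (gam t)). set (g := fun t => hy (gam t)).
  assert (Ef : (fun t => hx (hleft p gam t)) = (fun t => hx p + f t)) by reflexivity.
  assert (Eg : (fun t => hy (hleft p gam t)) = (fun t => hy p + g t)) by reflexivity.
  unfold Aq, Vq. cbv zeta. rewrite Ef, Eg.
  rewrite !Derive_newton_shift, !Derive_newton, !newton_shift.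
  split; [|reflexivity].
  set (Pf := newton xs f). set (Pg := newton xs g).
  assert (HI : ex_RInt (fun t => nd xs f t * Pg t - nd xs g t * Pf t) a b).
  { apply (ex_RInt_continuous (V:=R_CompleteNormedModule)). intros z _.
    apply (cont_minusR (fun t => nd xs f t * Pg t) (fun t => nd xs g t * Pf t)).
    apply (cont_multR (nd xs f) Pg). apply nd_cont. apply newton_cont.
    apply (cont_multR (nd xs g) Pf). apply nd_cont. apply newton_cont. }
  assert (Hf : is_RInt (nd xs f) a b (Pf b - Pf a)).
  { apply (is_RInt_derive (V:=R_CompleteNormedModule) Pf (nd xs f)); intros; [apply newton_der | apply nd_cont]. }
  assert (Hg : is_RInt (nd xs g) a b (Pg b - Pg a)).
  { apply (is_RInt_derive (V:=R_CompleteNormedModule) Pg (nd xs g)); intros; [apply newton_der | apply nd_cont]. }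
  assert (Htot : is_RInt (fun t => nd xs f t * (hy p + Pg t) - nd xs g t * (hx p + Pf t)) a b
     (RInt (fun t => nd xs f t * Pg t - nd xs g t * Pf t) a b
       + (hy p * (Pf b - Pf a) - hx p * (Pg b - Pg a)))).
  { set (I := fun t => nd xs f t * Pg t - nd xs g t * Pf t).
    set (J := fun t => hy p * nd xs f t - hx p * nd xs g t).
    assert (H1 : is_RInt I a b (RInt I a b)) by exact (RInt_correct I a b HI).
    assert (H2 : is_RInt J a b (hy p * (Pf b - Pf a) - hx p * (Pg b - Pg a))).
    { apply (isR_minus (fun t => hy p * nd xs f t) (fun t => hx p * nd xs g t)).
      apply (isR_scal (nd xs f)); auto. apply (isR_scal (nd xs g)); auto. }
    pose proof (isR_plus I J a b _ _ H1 H2) as H3.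
    apply (is_RInt_ext (V:=R_NormedModule) (fun y => I y + J y)); auto.
    intros y _. cbv beta. unfold I, J. change (@eq R (nd xs f y * Pg y - nd xs g y * Pf y + (hy p * nd xs f y - hx p * nd xs g y)) (nd xs f y * (hy p + Pg y) - nd xs g y * (hx p + Pf y))). ring. }
  rewrite (is_RInt_unique _ _ _ _ Htot).
  destruct (In_nth xs a 0 Ha) as [ja [Hja Ea]].
  destruct (In_nth xs b 0 Hb) as [jb [Hjb Eb]].
  assert (Pfa : Pf a = f a) by (rewrite <- Ea; apply newton_interp; auto).
  assert (Pfb : Pf b = f b) by (rewrite <- Eb; apply newton_interp; auto).
  assert (Pga : Pg a = g a) by (rewrite <- Ea; apply newton_interp; auto).
  assert (Pgb : Pg b = g b) by (rewrite <- Eb; apply newton_interp; auto).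
  rewrite Pfa, Pfb, Pga, Pgb. unfold Pf, Pg, f, g.
  unfold hleft, hmul, hz, hx, hy. simpl. ring.
Qed.
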